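(* Assume $b>1$, $\gamma:=kd/m-\alpha>0$ and $M>d/m$. Let $(S_t,Q_t)$ be the solution of the deterministic non-delayed system \[ S_t'=\big[\alpha-k\sigma(Q_t)\big]S_t,\qquad Q_t'=d-mQ_t+k(b-1)\sigma(Q_t)S_t, \] with initial condition $(S_0,Q_0)\in\big[0,\tfrac{mM-d}{k(b-1)M}\big]\times[d/m,M]$. Then there is a constant $c>0$ such that for all $t\ge0$, \[ |(S_t,Q_t)-E_0|\le c\,e^{-\eta t},\qquad E_0=(0,d/m),\quad \eta=\gamma\wedge\tfrac m2 . \]
   Context: Parameters $\alpha,k,d,m,M$ are positive constants. $\sigma:\mathbb R_+\to\mathbb R_+$ is a $C^\infty$ function with $\sigma(x)=x$ for $0\le x\le M$, $\sigma(x)=M+1$ for $x>M+1$, and $0\le\sigma'(x)\le C$ for some constant $C>1$. $|\cdot|$ is the Euclidean norm. *)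

(* Defs.v *)
From Stdlib Require Import Reals Lra.
Open Scope R_scope.

Definition smooth_on (f : R -> R) (P : R -> Prop) : Prop :=
  exists D : nat -> R -> R,
    (forall x, D 0%nat x = f x) /\
    (forall (n : nat) (x : R), P x -> derivable_pt_lim (D n) x (D (S n) x)).

Definition right_cont_at (f : R -> R) (a : R) : Prop :=
  forall eps, 0 < eps -> exists delta, 0 < delta /\
    forall t, a <= t < a + delta -> Rabs (f t - f a) < eps.

Definition norm2 (x y : R) : R := sqrt (x ^ 2 + y ^ 2).

(* Main.v *)
Require Import Defs.
From Stdlib Require Import Reals Lra Psatz Classical.
Open Scope R_scope.

Lemma exp_le_mono x y : x <= y -> exp x <= exp y.
Proof. intros [H|H]; [left; apply exp_increasing; auto|subst; lra]. Qed.

Lemma dext f g x l : (forall y, f y = g y) -> derivable_pt_lim f x l -> derivable_pt_lim g x l.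
Proof.
  intros He H eps Heps. destruct (H eps Heps) as [del Hd]. exists del.
  intros h Hh Hh2. rewrite <- !He. apply Hd; auto.
Qed.

Lemma deq f x l l' : derivable_pt_lim f x l -> l = l' -> derivable_pt_lim f x l'.
Proof. intros H ->; exact H. Qed.

Lemma dmul f g x lf lg : derivable_pt_lim f x lf -> derivable_pt_lim g x lg ->
  derivable_pt_lim (fun t => f t * g t) x (lf * g x + f x * lg).
Proof. intros; apply (derivable_pt_lim_mult f g x lf lg); auto. Qed.

Lemma dminus f g x lf lg : derivable_pt_lim f x lf -> derivable_pt_lim g x lg ->
  derivable_pt_lim (fun t => f t - g t) x (lf - lg).
Proof. intros; apply (derivable_pt_lim_minus f g x lf lg); auto. Qed.

Lemma dconst (c x : R) : derivable_pt_lim (fun _ => c) x 0.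
Proof. apply (derivable_pt_lim_const c x). Qed.

Lemma dexp_lin (c x : R) : derivable_pt_lim (fun s => exp (c * s)) x (c * exp (c * x)).
Proof.
  assert (H1 : derivable_pt_lim (fun s => c * s) x c).
  { apply deq with (c * 1); [|ring].
    apply (derivable_pt_lim_scal id c x 1). apply derivable_pt_lim_id. }
  pose proof (derivable_pt_lim_comp (fun s => c * s) exp x c (exp (c * x)) H1
     (derivable_pt_lim_exp _)) as H.
  apply deq with (exp (c * x) * c); [|ring].
  apply (dext (comp exp (fun s => c * s))); [reflexivity|exact H].
Qed.

Lemma cont_near f x : continuity_pt f x -> forall eps, 0 < eps ->
  exists del, 0 < del /\ forall y, Rabs (y - x) < del -> Rabs (f y - f x) < eps.
Proof.
  intros H eps Heps. destruct (H eps Heps) as [del [Hd Hy]].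
  exists del; split; [lra|]. intros y Hyx.
  destruct (Req_dec x y) as [->|Hne].
  - unfold Rminus; rewrite Rplus_opp_r, Rabs_R0; lra.
  - apply (Hy y). split; [split; [exact I|exact Hne]|exact Hyx].
Qed.

Lemma rc_lim f a : right_cont_at f a -> limit1_in f (fun t => a <= t) (f a) a.
Proof.
  intros H eps Heps. destruct (H eps Heps) as [del [Hd Ht]]. exists del; split; [lra|].
  intros x [Hx1 Hx2]. simpl in *. unfold R_dist in *. apply Ht.
  apply Rabs_def2 in Hx2. lra.
Qed.

Lemma lim_rc f a : limit1_in f (fun t => a <= t) (f a) a -> right_cont_at f a.
Proof.
  intros H eps Heps. destruct (H eps Heps) as [del [Hd Ht]]. exists del; split; [lra|].
  intros t Htt. specialize (Ht t). simpl in Ht. unfold R_dist in Ht. apply Ht.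
  split; [lra|]. rewrite Rabs_right; lra.
Qed.

Lemma rc_mul f g a : right_cont_at f a -> right_cont_at g a -> right_cont_at (fun t => f t * g t) a.
Proof. intros Hf Hg. apply lim_rc. apply limit_mul; apply rc_lim; auto. Qed.

Lemma rc_minus f g a : right_cont_at f a -> right_cont_at g a -> right_cont_at (fun t => f t - g t) a.
Proof. intros Hf Hg. apply lim_rc. apply limit_minus; apply rc_lim; auto. Qed.

Lemma rc_const (c a : R) : right_cont_at (fun _ => c) a.
Proof. intros eps Heps; exists 1; split; [lra|]; intros; unfold Rminus; rewrite Rplus_opp_r, Rabs_R0; lra. Qed.

Lemma rc_cont f a : continuity_pt f a -> right_cont_at f a.
Proof.
  intros H eps Heps. destruct (cont_near f a H eps Heps) as [del [Hd Hy]].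
  exists del; split; auto. intros t Ht. apply Hy. rewrite Rabs_right; lra.
Qed.

Lemma rc_exp (c : R) : right_cont_at (fun s => exp (c * s)) 0.
Proof.
  apply rc_cont. apply derivable_continuous_pt. exists (c * exp (c * 0)). apply dexp_lin.
Qed.

Lemma mono0 (g g' : R -> R) (T : R) : 0 < T -> right_cont_at g 0 ->
  (forall c, 0 < c <= T -> derivable_pt_lim g c (g' c)) ->
  (forall c, 0 < c < T -> g' c <= 0) ->
  forall s, 0 <= s <= T -> g s <= g 0.
Proof.
  intros HT Hrc Hd Hs s [Hs0 HsT].
  destruct (Req_dec s 0) as [->|Hne]; [lra|].
  assert (Hlt : forall x, 0 < x < s -> g s <= g x).
  { intros x Hx. destruct (MVT_cor2 g g' x s) as [c [Heq Hc]]; [lra| |].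
    - intros c Hc. apply Hd. lra.
    - assert (g' c <= 0) by (apply Hs; lra). nra. }
  destruct (Rle_or_lt (g s) (g 0)) as [|Hgt]; [assumption|exfalso].
  destruct (Hrc (g s - g 0)) as [del [Hdel Hx]]; [lra|].
  assert (Hm : 0 < Rmin del s) by (apply Rmin_glb_lt; lra).
  pose proof (Rmin_l del s). pose proof (Rmin_r del s).
  specialize (Hx (Rmin del s / 2)). specialize (Hlt (Rmin del s / 2)).
  assert (Hr : Rabs (g (Rmin del s / 2) - g 0) < g s - g 0) by (apply Hx; lra).
  apply Rabs_def2 in Hr. assert (g s <= g (Rmin del s / 2)) by (apply Hlt; lra). lra.
Qed.

Lemma mono0_up (g g' : R -> R) (T : R) : 0 < T -> right_cont_at g 0 ->
  (forall c, 0 < c <= T -> derivable_pt_lim g c (g' c)) ->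
  (forall c, 0 < c < T -> 0 <= g' c) ->
  forall s, 0 <= s <= T -> g 0 <= g s.
Proof.
  intros HT Hrc Hd Hs s Hs'.
  assert (H := mono0 (fun t => 0 - g t) (fun t => 0 - g' t) T HT
     (rc_minus _ _ 0 (rc_const 0 0) Hrc)).
  cut (0 - g s <= 0 - g 0); [lra|]. apply H; auto.
  - intros c Hc. apply dminus; [apply dconst|auto].
  - intros c Hc. specialize (Hs c Hc). lra.
Qed.

Lemma cont_ind (P : R -> Prop) :
  (exists del, 0 < del /\ forall s, 0 <= s < del -> P s) ->
  (forall T, 0 < T -> (forall s, 0 <= s < T -> P s) ->
     exists del, 0 < del /\ forall s, 0 <= s < T + del -> P s) ->
  forall t, 0 <= t -> P t.
Proof.
  intros [d0 [Hd0 H0]] Hstep t Ht.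
  set (E := fun T => 0 < T /\ forall s, 0 <= s < T -> P s).
  destruct (classic (exists T, E T /\ t < T)) as [[T [[_ HT] HtT]]|Hn].
  { apply HT; lra. }
  exfalso.
  assert (Hb : bound E).
  { exists t. intros T HT. destruct (Rle_or_lt T t); auto. exfalso; apply Hn; exists T; auto. }
  assert (He : exists x, E x) by (exists d0; split; auto).
  destruct (completeness E Hb He) as [Tm [Hub Hlub]].
  assert (HTm : 0 < Tm) by (apply Rlt_le_trans with d0; [lra| apply Hub; split; auto]).
  assert (Hall : forall s, 0 <= s < Tm -> P s).
  { intros s Hs. destruct (classic (exists T, E T /\ s < T)) as [[T [[_ HT] HsT]]|Hn'].
    - apply HT; lra.
    - exfalso. assert (Tm <= s).
      { apply Hlub. intros T HT. destruct (Rle_or_lt T s); auto. exfalso; apply Hn'; exists T; auto. }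
      lra. }
  destruct (Hstep Tm HTm Hall) as [del [Hdel Hext]].
  assert (E (Tm + del)) by (split; [lra| auto]).
  assert (Tm + del <= Tm) by (apply Hub; auto). lra.
Qed.
Theorem mainTheorem5
  (alpha k d m M b C : R) (sigma : R -> R) (St Qt : R -> R)
  (Halpha : 0 < alpha) (Hk : 0 < k) (Hd : 0 < d) (Hm : 0 < m) (HM : 0 < M)
  (HC : 1 < C)
  (Hsig_pos : forall x, 0 <= x -> 0 <= sigma x)
  (Hsig_smooth : smooth_on sigma (fun x => 0 < x))
  (Hsig_id : forall x, 0 <= x <= M -> sigma x = x)
  (Hsig_top : forall x, M + 1 < x -> sigma x = M + 1)
  (Hsig_der : forall x l, 0 < x -> derivable_pt_lim sigma x l -> 0 <= l <= C)
  (Hb : 1 < b)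
  (Hgamma : 0 < k * d / m - alpha)
  (HMdm : d / m < M)
  (HS_cont0 : right_cont_at St 0) (HQ_cont0 : right_cont_at Qt 0)
  (HS_ode : forall t, 0 < t ->
     derivable_pt_lim St t ((alpha - k * sigma (Qt t)) * St t))
  (HQ_ode : forall t, 0 < t ->
     derivable_pt_lim Qt t (d - m * Qt t + k * (b - 1) * sigma (Qt t) * St t))
  (HS0 : 0 <= St 0 <= (m * M - d) / (k * (b - 1) * M))
  (HQ0 : d / m <= Qt 0 <= M) :
  exists c, 0 < c /\
    forall t, 0 <= t ->
      norm2 (St t - 0) (Qt t - d / m)
        <= c * exp (- (Rmin (k * d / m - alpha) (m / 2)) * t).
Proof.
  set (q := d / m) in *.
  assert (Hq : 0 < q) by (unfold q; apply Rdiv_lt_0_compat; lra).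
  assert (Hmq : m * q = d) by (unfold q; field; lra).
  set (gam := k * d / m - alpha) in *.
  assert (Hgq : gam = k * q - alpha) by (unfold gam, q; field; lra).
  destruct Hsig_smooth as [D [HD0 HD]].
  assert (Hsd : forall x, 0 < x -> derivable_pt_lim sigma x (D 1%nat x)).
  { intros x Hx. apply (dext (D 0%nat)); [auto|]. apply HD; auto. }
  assert (sig_mono : forall x y, 0 < x <= y -> sigma x <= sigma y).
  { intros x y [Hx [Hxy|<-]]; [|lra].
    destruct (MVT_cor2 sigma (D 1%nat) x y Hxy) as [c [Heq Hc]].
    - intros c Hc. apply Hsd; lra.
    - assert (0 <= D 1%nat c) by (apply (Hsig_der c); [lra|apply Hsd; lra]). nra. }
  assert (sig_le : forall x, 0 < x -> sigma x <= M + 1).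
  { intros x Hx. destruct (Rle_or_lt x (M + 2)).
    - rewrite <- (Hsig_top (M + 2)) by lra. apply sig_mono; lra.
    - rewrite Hsig_top by lra. lra. }
  assert (sig_ge : forall x, q <= x -> q <= sigma x).
  { intros x Hx. rewrite <- (Hsig_id q) at 1 by lra. apply sig_mono; lra. }
  assert (Qc : forall t, 0 < t -> continuity_pt Qt t).
  { intros t Ht. apply derivable_continuous_pt. eexists; apply HQ_ode; auto. }
  assert (Sc : forall t, 0 < t -> continuity_pt St t).
  { intros t Ht. apply derivable_continuous_pt. eexists; apply HS_ode; auto. }
  set (L := alpha + k * (M + 1)).
  assert (HL : 0 < L) by (unfold L; nra).
  assert (Inv : forall T, 0 < T ->
     (forall s, 0 <= s < T -> q / 2 < Qt s /\ (0 < St 0 -> 0 < St s)) ->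
     forall s, 0 <= s <= T -> 0 <= St s /\ q <= Qt s /\ (0 < St 0 -> 0 < St s)).
  { intros T HT HP.
    assert (Ha : forall c, 0 < c < T ->
       0 <= sigma (Qt c) <= M + 1).
    { intros c Hc. destruct (HP c) as [HQc _]; [lra|].
      split; [apply Hsig_pos; lra| apply sig_le; lra]. }
    assert (G2 : forall s, 0 <= s <= T ->
       St s * St s * exp (-(2*L) * s) <= St 0 * St 0 * exp (-(2*L) * 0)).
    { apply (mono0 (fun s => St s * St s * exp (-(2*L) * s))
        (fun c => ((alpha - k * sigma (Qt c)) * St c * St c + St c * ((alpha - k * sigma (Qt c)) * St c)) * exp (-(2*L)*c)
                  + St c * St c * (-(2*L) * exp (-(2*L)*c))) T HT).
      - apply rc_mul; [apply rc_mul; auto|apply rc_exp].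
      - intros c Hc. apply (dmul (fun s => St s * St s) (fun s => exp (-(2*L)*s))); [apply (dmul St St); apply HS_ode; lra|apply dexp_lin].
      - intros c Hc. specialize (Ha c Hc). pose proof (exp_pos (-(2*L)*c)).
        assert (0 <= St c * St c) by nra.
        assert (E : ((alpha - k * sigma (Qt c)) * St c * St c + St c * ((alpha - k * sigma (Qt c)) * St c)) * exp (-(2*L)*c)
                  + St c * St c * (-(2*L) * exp (-(2*L)*c)) =
                  - (2 * (L - alpha + k * sigma (Qt c)) * (St c * St c) * exp (-(2*L)*c))) by ring.
        rewrite E. assert (0 <= L - alpha + k * sigma (Qt c)) by (unfold L; nra).
        assert (0 <= 2 * (L - alpha + k * sigma (Qt c)) * (St c * St c) * exp (-(2*L)*c)).
        { apply Rmult_le_pos; [apply Rmult_le_pos|]; lra. }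
        lra. }
    assert (G1 : forall s, 0 <= s <= T ->
       St 0 * St 0 * exp ((2*L) * 0) <= St s * St s * exp ((2*L) * s)).
    { apply (mono0_up (fun s => St s * St s * exp ((2*L) * s))
        (fun c => ((alpha - k * sigma (Qt c)) * St c * St c + St c * ((alpha - k * sigma (Qt c)) * St c)) * exp ((2*L)*c)
                  + St c * St c * ((2*L) * exp ((2*L)*c))) T HT).
      - apply rc_mul; [apply rc_mul; auto|apply rc_exp].
      - intros c Hc. apply (dmul (fun s => St s * St s) (fun s => exp ((2*L)*s))); [apply (dmul St St); apply HS_ode; lra|apply dexp_lin].
      - intros c Hc. specialize (Ha c Hc). pose proof (exp_pos ((2*L)*c)).
        assert (0 <= St c * St c) by nra.
        assert (E : ((alpha - k * sigma (Qt c)) * St c * St c + St c * ((alpha - k * sigma (Qt c)) * St c)) * exp ((2*L)*c)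
                  + St c * St c * ((2*L) * exp ((2*L)*c)) =
                  (2 * (L + alpha - k * sigma (Qt c)) * (St c * St c) * exp ((2*L)*c))) by ring.
        rewrite E. assert (0 <= L + alpha - k * sigma (Qt c)) by (unfold L; nra).
        apply Rmult_le_pos; [apply Rmult_le_pos|]; lra. }
    assert (Spos : forall s, 0 <= s <= T -> 0 <= St s /\ (0 < St 0 -> 0 < St s)).
    { intros s Hs. destruct (proj1 HS0) as [H0|H0].
      - assert (Hpos : 0 < St s).
        { destruct Hs as [Hs1 [HsT|HsT]].
          - apply (proj2 (HP s ltac:(lra))); auto.
          - subst s. specialize (G1 T ltac:(lra)). rewrite Rmult_0_r, exp_0 in G1.
            pose proof (exp_pos (2*L*T)).
            destruct (Rtotal_order (St T) 0) as [Hneg|[Hz|Hp]]; [|rewrite Hz in G1; nra|auto].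
            exfalso. destruct (cont_near St T (Sc T HT) (- St T) ltac:(lra)) as [del [Hdel Hy]].
            assert (Hm0 : 0 < Rmin del T) by (apply Rmin_glb_lt; lra).
            pose proof (Rmin_l del T). pose proof (Rmin_r del T).
            assert (Hr : Rabs (St (T - Rmin del T / 2) - St T) < - St T).
            { apply Hy. rewrite Rabs_left; lra. }
            apply Rabs_def2 in Hr.
            assert (0 < St (T - Rmin del T / 2)) by (apply (proj2 (HP (T - Rmin del T / 2) ltac:(lra))); auto).
            lra. }
        split; [lra|auto].
      - rewrite <- H0 in G2. specialize (G2 s Hs). replace (-(2*L)*0) with 0 in G2 by ring. rewrite exp_0 in G2.
        pose proof (exp_pos (-(2*L)*s)).
        assert (St s * St s <= 0).
        { apply Rmult_le_reg_r with (exp (-(2*L)*s)); auto. lra. }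
        assert (St s = 0) by nra. split; [lra|]. intros; lra. }
    intros s Hs. destruct (Spos s Hs) as [Hs1 Hs2]. split; [auto|split; [|auto]].
    assert (Hu := mono0_up (fun s => (Qt s - q) * exp (m * s))
        (fun c => (d - m * Qt c + k * (b - 1) * sigma (Qt c) * St c - 0) * exp (m * c)
                  + (Qt c - q) * (m * exp (m * c))) T HT).
    assert (H := Hu ltac:(apply rc_mul; [apply rc_minus; [auto|apply rc_const]|apply rc_exp])).
    clear Hu.
    assert (H' : (Qt 0 - q) * exp (m * 0) <= (Qt s - q) * exp (m * s)).
    { apply H; auto.
      - intros c Hc. apply (dmul (fun s => Qt s - q) (fun s => exp (m*s))); [apply (dminus Qt (fun _ => q)); [apply HQ_ode; lra|apply dconst]|apply dexp_lin].
      - intros c Hc. specialize (Ha c Hc). pose proof (exp_pos (m*c)).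
        destruct (Spos c ltac:(lra)) as [Sc0 _].
        assert (E : (d - m * Qt c + k * (b - 1) * sigma (Qt c) * St c - 0) * exp (m * c)
                  + (Qt c - q) * (m * exp (m * c)) = (d - m * q + k * (b - 1) * sigma (Qt c) * St c) * exp (m * c)) by ring.
        rewrite E, Hmq. apply Rmult_le_pos; [|lra].
        replace (d - d + k * (b - 1) * sigma (Qt c) * St c) with (k * (b - 1) * sigma (Qt c) * St c) by ring.
        apply Rmult_le_pos; [apply Rmult_le_pos|]; [nra| lra | lra]. }
    rewrite Rmult_0_r, exp_0 in H'. pose proof (exp_pos (m*s)).
    assert (0 <= (Qt s - q) * exp (m * s)) by lra.
    assert (0 <= Qt s - q).
    { apply Rmult_le_reg_r with (exp (m * s)); auto. lra. }
    lra. }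

  set (P := fun s => q / 2 < Qt s /\ (0 < St 0 -> 0 < St s)).
  assert (HPall : forall t, 0 <= t -> P t).
  { apply cont_ind.
    - destruct (HQ_cont0 (q/2) ltac:(lra)) as [d1 [Hd1 H1]].
      destruct (Rlt_or_le 0 (St 0)) as [Hs0|Hs0].
      + destruct (HS_cont0 (St 0) Hs0) as [d2 [Hd2 H2]].
        exists (Rmin d1 d2). split; [apply Rmin_glb_lt; lra|].
        intros s Hs. pose proof (Rmin_l d1 d2). pose proof (Rmin_r d1 d2).
        specialize (H1 s ltac:(lra)). specialize (H2 s ltac:(lra)).
        apply Rabs_def2 in H1. apply Rabs_def2 in H2. split; [lra|intros; lra].
      + exists d1. split; auto. intros s Hs. specialize (H1 s ltac:(lra)).
        apply Rabs_def2 in H1. split; [lra|intros; lra].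
    - intros T HT HP. destruct (Inv T HT HP T ltac:(lra)) as [_ [HQT HST]].
      destruct (cont_near Qt T (Qc T HT) (q/2) ltac:(lra)) as [d1 [Hd1 H1]].
      destruct (Rlt_or_le 0 (St 0)) as [Hs0|Hs0].
      + specialize (HST Hs0).
        destruct (cont_near St T (Sc T HT) (St T) HST) as [d2 [Hd2 H2]].
        exists (Rmin d1 d2). split; [apply Rmin_glb_lt; lra|].
        intros s Hs. destruct (Rlt_or_le s T) as [HsT|HsT]; [apply HP; lra|].
        pose proof (Rmin_l d1 d2). pose proof (Rmin_r d1 d2).
        specialize (H1 s ltac:(rewrite Rabs_right; lra)). specialize (H2 s ltac:(rewrite Rabs_right; lra)).
        apply Rabs_def2 in H1. apply Rabs_def2 in H2. split; [lra|intros; lra].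
      + exists d1. split; auto. intros s Hs.
        destruct (Rlt_or_le s T) as [HsT|HsT]; [apply HP; lra|].
        specialize (H1 s ltac:(rewrite Rabs_right; lra)).
        apply Rabs_def2 in H1. split; [lra|intros; lra]. }
  assert (GS : forall t, 0 <= t -> 0 <= St t /\ q <= Qt t).
  { intros t Ht. destruct (Inv (t + 1) ltac:(lra) (fun s Hs => HPall s ltac:(lra)) t ltac:(lra)) as [A [B _]].
    auto. }
  set (eta := Rmin gam (m / 2)).
  assert (Heg : eta <= gam) by apply Rmin_l.
  assert (Hem : eta <= m / 2) by apply Rmin_r.
  assert (Hep : 0 < eta) by (apply Rmin_glb_lt; lra).
  set (S0 := St 0).
  assert (HS0p : 0 <= S0) by (unfold S0 in *; lra).
  assert (SD : forall t, 0 <= t -> St t <= S0 * exp (- gam * t)).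
  { intros t Ht.
    assert (H := mono0 (fun s => St s * exp (gam * s))
        (fun c => (alpha - k * sigma (Qt c)) * St c * exp (gam * c) + St c * (gam * exp (gam * c)))
        (t + 1) ltac:(lra) (rc_mul _ _ _ HS_cont0 (rc_exp gam))).
    assert (H' : St t * exp (gam * t) <= St 0 * exp (gam * 0)).
    { apply H; [| |lra].
      - intros c Hc. apply (dmul St (fun s => exp (gam * s))); [apply HS_ode; lra|apply dexp_lin].
      - intros c Hc. destruct (GS c ltac:(lra)) as [Sc0 Qc0].
        pose proof (sig_ge _ Qc0). pose proof (exp_pos (gam * c)).
        assert (E : (alpha - k * sigma (Qt c)) * St c * exp (gam * c) + St c * (gam * exp (gam * c))
                   = - ((k * sigma (Qt c) - k * q) * St c * exp (gam * c))) by (rewrite Hgq; ring).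
        rewrite E. assert (0 <= (k * sigma (Qt c) - k * q) * St c * exp (gam * c)).
        { apply Rmult_le_pos; [apply Rmult_le_pos|]; nra. }
        lra. }
    rewrite Rmult_0_r, exp_0, Rmult_1_r in H'.
    assert (Ee : exp (gam * t) * exp (- gam * t) = 1) by (rewrite <- exp_plus; replace (gam * t + - gam * t) with 0 by ring; apply exp_0).
    pose proof (exp_pos (-gam * t)).
    replace (St t) with (St t * exp (gam * t) * exp (- gam * t)) by (rewrite Rmult_assoc, Ee; ring).
    apply Rmult_le_compat_r; [lra|]. unfold S0. lra. }
  set (K := k * (b - 1) * (M + 1) * S0).
  assert (HK : 0 <= K) by (unfold K; repeat apply Rmult_le_pos; lra).
  set (c1 := eta + m / 2).
  set (u0 := Qt 0 - q).
  assert (Hu0 : 0 <= u0) by (unfold u0; lra).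
  assert (QD : forall t, 0 <= t -> Qt t - q <= (u0 + 2 * K / m) * exp (- eta * t)).
  { intros t Ht.
    assert (H := mono0 (fun s => (Qt s - q) * exp (c1 * s) - (2 * K / m) * exp ((m/2) * s))
        (fun c => ((d - m * Qt c + k * (b - 1) * sigma (Qt c) * St c - 0) * exp (c1 * c)
                   + (Qt c - q) * (c1 * exp (c1 * c))) - (0 * exp ((m/2) * c) + (2 * K / m) * ((m/2) * exp ((m/2) * c))))
        (t + 1) ltac:(lra)).
    assert (H' : (Qt t - q) * exp (c1 * t) - (2 * K / m) * exp ((m/2) * t) <=
                 (Qt 0 - q) * exp (c1 * 0) - (2 * K / m) * exp ((m/2) * 0)).
    { apply H; [| | |lra].
      - apply rc_minus; apply rc_mul; [apply rc_minus; [auto|apply rc_const]|apply rc_exp|apply rc_const|apply rc_exp].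
      - intros c Hc.
        apply (dminus (fun s => (Qt s - q) * exp (c1 * s)) (fun s => (2 * K / m) * exp ((m/2) * s))).
        + apply (dmul (fun s => Qt s - q) (fun s => exp (c1*s))); [apply (dminus Qt (fun _ => q)); [apply HQ_ode; lra|apply dconst]|apply dexp_lin].
        + apply (dmul (fun _ => 2 * K / m) (fun s => exp ((m/2)*s))); [apply dconst|apply dexp_lin].
      - intros c Hc. destruct (GS c ltac:(lra)) as [Sc0 Qc0].
        pose proof (SD c ltac:(lra)) as SDc.
        assert (Hs1 : 0 <= sigma (Qt c) <= M + 1) by (split; [apply Hsig_pos; lra|apply sig_le; lra]).
        pose proof (exp_pos (c1 * c)). pose proof (exp_pos (- gam * c)).
        assert (Hx : exp (- gam * c) * exp (c1 * c) <= exp ((m/2) * c)).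
        { rewrite <- exp_plus. apply exp_le_mono. unfold c1. nra. }
        assert (Hss : sigma (Qt c) * St c <= (M + 1) * (S0 * exp (- gam * c))).
        { apply Rmult_le_compat; lra. }
        assert (Hk1 : 0 <= k * (b - 1)) by nra.
        assert (T1 : k * (b - 1) * (sigma (Qt c) * St c) * exp (c1 * c) <= K * exp ((m/2) * c)).
        { apply Rle_trans with (k * (b - 1) * ((M + 1) * (S0 * exp (- gam * c))) * exp (c1 * c)).
          - apply Rmult_le_compat_r; [lra|]. apply Rmult_le_compat_l; auto.
          - replace (k * (b - 1) * ((M + 1) * (S0 * exp (- gam * c))) * exp (c1 * c))
              with (K * (exp (- gam * c) * exp (c1 * c))) by (unfold K; ring).
            apply Rmult_le_compat_l; auto. }
        assert (T2 : 0 <= (m / 2 - eta) * (Qt c - q) * exp (c1 * c)).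
        { apply Rmult_le_pos; [apply Rmult_le_pos|]; lra. }
        assert (E : ((d - m * Qt c + k * (b - 1) * sigma (Qt c) * St c - 0) * exp (c1 * c)
                   + (Qt c - q) * (c1 * exp (c1 * c))) - (0 * exp ((m/2) * c) + (2 * K / m) * ((m/2) * exp ((m/2) * c)))
                  = k * (b - 1) * (sigma (Qt c) * St c) * exp (c1 * c) - K * exp ((m/2) * c)
                    - (m / 2 - eta) * (Qt c - q) * exp (c1 * c)).
        { rewrite <- Hmq. unfold c1. field. lra. }
        rewrite E. lra. }
    rewrite !Rmult_0_r, exp_0, !Rmult_1_r in H'.
    fold u0 in H'.
    set (Eh := exp (- eta * t)). set (Em := exp (- (m/2) * t)).
    assert (E1 : exp (c1 * t) * Eh * Em = 1).
    { unfold Eh, Em. rewrite <- !exp_plus. replace (c1 * t + - eta * t + - (m / 2) * t) with 0 by (unfold c1; ring). apply exp_0. }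
    assert (E2 : exp ((m/2) * t) * Em = 1).
    { unfold Em. rewrite <- !exp_plus. replace (m/2 * t + - (m / 2) * t) with 0 by ring. apply exp_0. }
    assert (HEh : 0 < Eh) by apply exp_pos. assert (HEm : 0 < Em) by apply exp_pos.
    assert (HEm1 : Em <= 1) by (unfold Em; rewrite <- exp_0; apply exp_le_mono; nra).
    assert (H2 : (Qt t - q) * exp (c1 * t) * (Eh * Em) <= (u0 - 2 * K / m + 2 * K / m * exp (m / 2 * t)) * (Eh * Em)).
    { apply Rmult_le_compat_r; [apply Rmult_le_pos; lra|lra]. }
    replace ((Qt t - q) * exp (c1 * t) * (Eh * Em)) with (Qt t - q) in H2
      by (replace ((Qt t - q) * exp (c1 * t) * (Eh * Em)) with ((Qt t - q) * (exp (c1 * t) * Eh * Em)) by ring; rewrite E1; ring).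
    replace ((u0 - 2 * K / m + 2 * K / m * exp (m / 2 * t)) * (Eh * Em)) with
      ((u0 - 2 * K / m) * Em * Eh + 2 * K / m * Eh) in H2
      by (replace ((u0 - 2 * K / m + 2 * K / m * exp (m / 2 * t)) * (Eh * Em)) with
           ((u0 - 2 * K / m) * Em * Eh + 2 * K / m * Eh * (exp (m / 2 * t) * Em)) by ring; rewrite E2; ring).
    assert (HKm : 0 <= 2 * K / m) by (apply Rmult_le_pos; [lra|apply Rlt_le, Rinv_0_lt_compat; lra]).
    assert ((u0 - 2 * K / m) * Em <= u0) by nra.
    assert ((u0 - 2 * K / m) * Em * Eh <= u0 * Eh) by (apply Rmult_le_compat_r; lra).
    lra. }
  exists (S0 + u0 + 2 * K / m + 1). split.
  { assert (0 <= 2 * K / m) by (apply Rmult_le_pos; [lra|apply Rlt_le, Rinv_0_lt_compat; lra]).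
    lra. }
  intros t Ht. fold gam. fold eta.
  destruct (GS t Ht) as [Sp Qp]. pose proof (SD t Ht). pose proof (QD t Ht).
  assert (Hx : exp (- gam * t) <= exp (- eta * t)) by (apply exp_le_mono; nra).
  assert (HS0' : 0 <= S0) by (unfold S0; lra).
  assert (HKm : 0 <= 2 * K / m) by (apply Rmult_le_pos; [lra|apply Rlt_le, Rinv_0_lt_compat; lra]).
  pose proof (exp_pos (- eta * t)).
  assert (Hsum : St t - 0 + (Qt t - q) <= (S0 + u0 + 2 * K / m + 1) * exp (- eta * t)).
  { assert (S0 * exp (- gam * t) <= S0 * exp (- eta * t)) by (apply Rmult_le_compat_l; lra).
    nra. }
  unfold norm2. apply Rle_trans with (sqrt ((St t - 0 + (Qt t - q)) ^ 2)).
  - apply sqrt_le_1_alt. nra.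
  - rewrite sqrt_pow2 by lra. lra.
Qed.
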